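(* Let $(s,\vec r)$ be a molecule with $N$ atoms and pairwise distinct positions, and let $r_c>\max_{i,j}\|\vec r_i-\vec r_j\|$, so that every local environment contains all atoms. Let $g$ be a function from local environments to $\mathbb{R}^{3\times 3}$ which is $\mathrm{O}(3)$-equivariant and such that $g(A)$ has rank $3$ for every local environment $A$ for which no $o\in\mathrm{O}(3)$, $o\neq I$, satisfies $\{(s',xo^T):(s',x)\in A\}=A$. Define $\vec E_i=g(\{(s_j,\vec r_i-\vec r_j): j=1,\dots,N\})$ and $\vec E=\sum_{i=1}^N\vec E_i$. If $\mathrm{rank}(\vec E_i)<3$ for some $i$, then $\mathrm{rank}(\vec E)<3$.
   Context: $s\in\mathbb{R}^{N\times d}$ and $\vec r\in\mathbb{R}^{N\times3}$ have rows $s_i$ and $\vec r_i\in\mathbb{R}^{1\times 3}$. $\mathrm{O}(3)=\{Q\in\mathbb{R}^{3\times3}:QQ^T=I\}$ and $I$ is the identity. A local environment is a finite set of pairs $(s',x)$ with $s'\in\mathbb{R}^d$, $x\in\mathbb{R}^{1\times 3}$. $g$ being $\mathrm{O}(3)$-equivariant means $g(\{(s',xo^T):(s',x)\in A\})=g(A)o^T$ for all $o\in\mathrm{O}(3)$ and all local environments $A$. *)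

(* Defs.v *)
From HB Require Import structures.
From mathcomp Require Import all_boot all_order all_algebra.
From mathcomp Require Import finmap.
From mathcomp Require Import reals.

Set Implicit Arguments.
Unset Strict Implicit.
Unset Printing Implicit Defensive.

Import Order.TTheory GRing.Theory Num.Theory.
Local Open Scope ring_scope.

Definition local_env (R : realType) (d : nat) :=
  {fset ('rV[R]_d * 'rV[R]_3)}.

Definition orthogonal3 (R : realType) (o : 'M[R]_3) : Prop :=
  o *m o^T = 1%:M.

Definition act_env (R : realType) (d : nat) (o : 'M[R]_3)
  (A : local_env R d) : local_env R d :=
  [fset (p.1, p.2 *m o^T) | p in A]%fset.

Definition O3_equivariant (R : realType) (d : nat)
  (g : local_env R d -> 'M[R]_3) : Prop :=
  forall (o : 'M[R]_3) (A : local_env R d),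
    orthogonal3 o -> g (act_env o A) = g A *m o^T.

Definition trivial_stabilizer (R : realType) (d : nat) (A : local_env R d)
  : Prop :=
  forall o : 'M[R]_3, orthogonal3 o -> act_env o A = A -> o = 1%:M.

Definition full_env (R : realType) (d N : nat) (s : 'M[R]_(N, d))
  (r : 'M[R]_(N, 3)) (i : 'I_N) : local_env R d :=
  [fset (row j s, row i r - row j r) | j : 'I_N]%fset.

(* Main.v *)
Require Import Defs.
From HB Require Import structures.
From mathcomp Require Import all_boot all_order all_algebra.
From mathcomp Require Import finmap.
From mathcomp Require Import reals.
Import Order.TTheory GRing.Theory Num.Theory.
Local Open Scope ring_scope.

Section Aux.
Variables (R : realType) (d N : nat) (s : 'M[R]_(N, d)) (r : 'M[R]_(N, 3)).
Hypothesis hdistinct : forall i j : 'I_N, row i r = row j r -> i = j.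
Variable g : local_env R d -> 'M[R]_3.
Hypothesis hequiv : O3_equivariant g.
Variables (i : 'I_N) (o : 'M[R]_3).
Hypothesis ho : orthogonal3 o.
Hypothesis hact : act_env o (full_env s r i) = full_env s r i.

Let P j k := (row k s, row i r - row k r) == (row j s, (row i r - row j r) *m o^T).

Lemma exP j : exists k, P j k.
Proof.
have : (row j s, (row i r - row j r) *m o^T) \in act_env o (full_env s r i).
  apply/imfsetP; exists (row j s, row i r - row j r) => //.
  by apply/imfsetP; exists j.
rewrite hact => /imfsetP [k _ /= ek]; exists k; by rewrite /P ek.
Qed.

Definition pi j := odflt j [pick k | P j k].

Lemma piP j : P j (pi j).
Proof.
rewrite /pi; case: pickP => [k //|H]; case: (exP j) => k Hk.
by move: (H k); rewrite Hk.
Qed.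

Lemma pi_s j : row (pi j) s = row j s.
Proof. by have /eqP [] := piP j. Qed.

Lemma pi_r j : row i r - row (pi j) r = (row i r - row j r) *m o^T.
Proof. by have /eqP [] := piP j. Qed.

Lemma oT_inv : o^T *m o = 1%:M.
Proof. exact: mulmx1C ho. Qed.

Lemma pi_inj : injective pi.
Proof.
move=> j1 j2 e.
have : (row i r - row j1 r) *m o^T *m o = (row i r - row j2 r) *m o^T *m o.
  by rewrite -!pi_r e.
rewrite -!mulmxA oT_inv !mulmx1 => H; apply: hdistinct.
by apply: oppr_inj; apply: (addrI (row i r)).
Qed.

Lemma pi_rr k j : (row k r - row j r) *m o^T = row (pi k) r - row (pi j) r.
Proof.
have -> : row k r - row j r = (row i r - row j r) - (row i r - row k r).
  by rewrite opprB [X in _ = X]addrC addrA subrK.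
by rewrite mulmxBl -!pi_r opprB addrC addrA subrK.
Qed.

Lemma act_full k : act_env o (full_env s r k) = full_env s r (pi k).
Proof.
apply/fsetP => x; apply/idP/idP.
- case/imfsetP => p /imfsetP [j _ ->] -> /=.
  rewrite pi_rr -pi_s.
  by apply/imfsetP; exists (pi j).
- case/imfsetP => j _ ->.
  have -> : j = pi (invF pi_inj j) by rewrite f_invF.
  rewrite pi_s -pi_rr.
  apply/imfsetP; exists (row (invF pi_inj j) s, row k r - row (invF pi_inj j) r) => //.
  by apply/imfsetP; exists (invF pi_inj j).
Qed.

Lemma sum_fixed : (\sum_(k < N) g (full_env s r k)) *m o^T = \sum_(k < N) g (full_env s r k).
Proof.
rewrite mulmx_suml [RHS](reindex_inj pi_inj) /=.
by apply: eq_bigr => k _; rewrite -act_full (hequiv _ _ ho).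
Qed.

End Aux.

Theorem corollary1 (R : realType) (d N : nat)
  (s : 'M[R]_(N, d)) (r : 'M[R]_(N, 3))
  (hdistinct : forall i j : 'I_N, row i r = row j r -> i = j)
  (g : local_env R d -> 'M[R]_3)
  (hequiv : O3_equivariant g)
  (hrank : forall A : local_env R d, trivial_stabilizer A -> \rank (g A) = 3%N)
  (hi : exists i : 'I_N, (\rank (g (full_env s r i)) < 3)%N) :
  (\rank (\sum_(i < N) g (full_env s r i))%R < 3)%N.
Proof.
case: hi => i hi.
rewrite ltnNge; apply/negP => hE.
have hfull : row_full (\sum_(k < N) g (full_env s r k))%R.
  by rewrite /row_full eqn_leq rank_leq_col hE.
move: hfull; rewrite row_full_unit => hU.
suff : \rank (g (full_env s r i)) = 3%N by move=> e; rewrite e in hi.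
apply: hrank => o ho hact.
have hs := @sum_fixed R d N s r hdistinct g hequiv i o ho hact.
have : o^T = 1%:M.
  have := congr1 (mulmx (invmx (\sum_(k < N) g (full_env s r k))%R)) hs.
  by rewrite mulKmx // mulVmx.
by move/(congr1 trmx); rewrite trmxK trmx1.
Qed.
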